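(* Let $n$ be a positive integer and let $\pi\subseteq\mathbb{Z}^2$ be a hexagonal permutation with $n$ dots. Then there exist an integer $i$ with $0\le i\le n-1$ and a translation vector $(a,b)\in\mathbb{Z}^2$ such that every dot of $\pi$ lies in $(a,b)+S_i(n)$, where $$S_i(n)=\{(x,y)\in\mathbb{Z}^2:\ 0\le x\le n-1,\ 0\le y\le n-1,\ -i\le x-y\le n-1-i\}.$$
   Context: Cells of the hexagonal grid are represented by cells $(x,y)\in\mathbb{Z}^2$ of the square grid (cell $(x,y)$ adjacent to $(x\pm1,y)$, $(x,y\pm1)$, $(x+1,y+1)$, $(x-1,y-1)$). The three families of ''rows'' are the rows $\{y=c\}$, the columns $\{x=c\}$ and the standard diagonals $\{x-y=c\}$, $c\in\mathbb{Z}$; lines of the same family are consecutive if their constants differ by $1$. A hexagonal permutation with $n$ dots is a set $\pi$ of $n$ cells such that, for each of the three families, the lines of that family containing a dot of $\pi$ are exactly $n$ consecutive lines, each containing exactly one dot of $\pi$. (Equivalently, $S_i(n)$, $0\le i\le n-1$, are the intersections of an $n\times n$ square with $n$ consecutive standard diagonals each meeting the square.) *)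

(* Defs.v *)
From HB Require Import structures.
From mathcomp Require Import all_boot all_order all_algebra.
Set Implicit Arguments. Unset Strict Implicit. Unset Printing Implicit Defensive.
Import Order.TTheory GRing.Theory Num.Theory.
Local Open Scope ring_scope.

Definition cell := (int * int)%type.

Definition row_of (p : cell) : int := p.2.
Definition col_of (p : cell) : int := p.1.
Definition diag_of (p : cell) : int := p.1 - p.2.

Definition family_ok (f : cell -> int) (n : nat) (s : seq cell) : Prop :=
  exists c : int,
    (forall k : int, (exists2 p, p \in s & f p = k) <-> (c <= k < c + n%:Z))
    /\ (forall p q, p \in s -> q \in s -> f p = f q -> p = q).

Definition hex_perm (n : nat) (s : seq cell) : Prop :=
  [/\ uniq s, size s = n,
      family_ok row_of n s, family_ok col_of n s & family_ok diag_of n s].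

Definition in_S (i n : nat) (p : cell) : Prop :=
  [/\ 0 <= p.1 <= n%:Z - 1, 0 <= p.2 <= n%:Z - 1
    & - i%:Z <= p.1 - p.2 <= n%:Z - 1 - i%:Z].

(* Main.v *)
Require Import Defs.
From HB Require Import structures.
From mathcomp Require Import all_boot all_order all_algebra.
From mathcomp Require Import zify.
Import Order.TTheory GRing.Theory Num.Theory.
Local Open Scope ring_scope.

Theorem lemma3 (n : nat) (s : seq cell) :
  (0 < n)%N -> hex_perm n s ->
  exists i : nat, (i <= n - 1)%N /\
  exists a b : int, forall p, p \in s -> in_S i n (p.1 - a, p.2 - b).
Proof.
move=> n0 [_ _ [r [Hr _]] [c [Hc _]] [d [Hd _]]].
have Rr p : p \in s -> r <= p.2 < r + n%:Z.
  by move=> ps; apply/(Hr p.2); exists p.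
have Rc p : p \in s -> c <= p.1 < c + n%:Z.
  by move=> ps; apply/(Hc p.1); exists p.
have Rd p : p \in s -> d <= p.1 - p.2 < d + n%:Z.
  by move=> ps; apply/(Hd (p.1 - p.2)); exists p.
have [p ps pd] : exists2 p, p \in s & diag_of p = d.
  apply/(Hd d); apply/andP; split => //; lia.
have [q qs qd] : exists2 p, p \in s & diag_of p = d + n%:Z - 1.
  apply/(Hd _); apply/andP; split; lia.
rewrite /diag_of in pd qd.
move: (Rr p ps) (Rc p ps) (Rr q qs) (Rc q qs).
case: p {ps} pd => p1 p2; case: q {qs} qd => q1 q2 /= qd pd.
move=> /andP[? ?] /andP[? ?] /andP[? ?] /andP[? ?].
have h0 : 0 <= c - r - d by lia.
exists (absz (c - r - d)%R); split.
  have := abszE (c - r - d)%R; rewrite ger0_norm // => E. lia.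
exists c, r => x xs.
have e := abszE (c - r - d)%R; rewrite ger0_norm // in e.
move: (Rr x xs) (Rc x xs) (Rd x xs); case: x {xs} => x1 x2 /=.
move=> /andP[? ?] /andP[? ?] /andP[? ?].
rewrite /in_S /= -e; split; apply/andP; split; lia.
Qed.
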